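(* Let $\mathcal{G}=(V,L)$ be a finite connected undirected graph with monitor set $M$ and non-monitor set $N=V\setminus M$, $\sigma=|N|$, and let $P$ be a given set of measurement paths between monitors (Uncontrollable Probing). Then for every $v\in N$, the maximum identifiability index of $v$ satisfies $\mathrm{MSC}(v)-1\le\Omega_{\mathrm{UP}}(v)\le\mathrm{MSC}(v)$.
   Context: Failure model: a failure set is any $F\subseteq N$; a path fails iff it traverses a node of $F$. $P_F$ is the set of paths in $P$ traversing a node of $F$; $F_1,F_2$ distinguishable iff $P_{F_1}\ne P_{F_2}$. $S\subseteq N$ is $k$-identifiable if any two failure sets $F_1,F_2$ with $|F_1|,|F_2|\le k$ and $F_1\cap S\ne F_2\cap S$ are distinguishable (every set is trivially $0$-identifiable). $\Omega(v)$ is the maximum $k\in\{0,\dots,\sigma\}$ such that $\{v\}$ is $k$-identifiable. For $v\in N$, $P_v$ is the set of paths in $P$ traversing $v$. $\mathrm{MSC}(v)$ is the minimum cardinality of a set $V'\subseteq N\setminus\{v\}$ with $P_v\subseteq\bigcup_{w\in V'}P_w$; if no such $V'$ exists (e.g. when $v$ lies on a two-hop measurement path monitor–$v$–monitor), $\mathrm{MSC}(v):=\sigma$. *)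

(* Defs.v *)
From mathcomp Require Import all_boot.
Set Implicit Arguments. Unset Strict Implicit. Unset Printing Implicit Defensive.

Section Tomography.
Variables (T : finType) (M : {set T}) (m : nat) (P : 'I_m -> seq T).

Definition nonmon : {set T} := ~: M.
Definition sigma : nat := #|nonmon|.

Definition PF (F : {set T}) : {set 'I_m} := [set i | has (fun x => x \in F) (P i)].

Definition distinguishable (F1 F2 : {set T}) : bool := PF F1 != PF F2.

Definition k_identifiable (S : {set T}) (k : nat) : bool :=
  [forall F1 : {set T}, forall F2 : {set T},
     [&& F1 \subset nonmon, F2 \subset nonmon, #|F1| <= k, #|F2| <= k
       & F1 :&: S != F2 :&: S] ==> distinguishable F1 F2].

Definition Omega (v : T) : nat :=
  \max_(k < sigma.+1 | k_identifiable [set v] k) k.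

Definition msc_cover (v : T) (V' : {set T}) : bool :=
  (V' \subset nonmon :\ v) && (PF [set v] \subset PF V').

Definition MSC (v : T) : nat :=
  if [exists V' : {set T}, msc_cover v V']
  then \big[minn/sigma]_(V' : {set T} | msc_cover v V') #|V'|
  else sigma.
End Tomography.

Definition measurement_path (T : finType) (e : rel T) (M : {set T}) (q : seq T) : Prop :=
  exists x s, [/\ q = x :: s, s != [::], path e x s, uniq q & (x \in M) && (last x s \in M)].

(* Main.v *)
Require Import Defs.
From mathcomp Require Import all_boot.

Section Aux.
Variables (T : finType) (M : {set T}) (m : nat) (P : 'I_m -> seq T).

Lemma PFU (A B : {set T}) : PF P (A :|: B) = PF P A :|: PF P B.
Proof.
apply/setP => i; rewrite !inE; apply/hasP/orP.
  by case=> x hx; rewrite inE => /orP [h|h]; [left|right]; apply/hasP; exists x.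
by case=> /hasP [x hx h]; exists x => //; rewrite inE h ?orbT.
Qed.

Lemma MSC_le_sigma v : MSC M P v <= sigma M.
Proof.
rewrite /MSC; case: ifP => // _.
apply: (big_ind (fun x => x <= sigma M)) => // [x y hx hy|V /andP [hs _]]; first by rewrite geq_min hx.
rewrite /sigma; apply: subset_leq_card; apply: (subset_trans hs); exact: subD1set.
Qed.

Lemma MSC_le_cover v V : msc_cover M P v V -> MSC M P v <= #|V|.
Proof.
move=> hV; rewrite /MSC; have -> : [exists V', msc_cover M P v V'] by apply/existsP; exists V.
rewrite /=.
have : V \in index_enum {set T} by rewrite mem_index_enum.
elim: (index_enum _) => [//|a r IH]; rewrite inE big_cons.
case/orP => [/eqP <-|hr]; first by rewrite hV geq_minl.
by case: ifP => _; rewrite ?geq_min IH ?orbT.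
Qed.

Lemma Omega_le v (c : nat) :
  (forall k, k <= sigma M -> k_identifiable M P [set v] k -> k <= c) -> Omega M P v <= c.
Proof.
move=> H; rewrite /Omega.
by apply: (big_ind (fun x => x <= c)) => // [x y hx hy|i /H]; [rewrite geq_max hx|apply; rewrite -ltnS].
Qed.
End Aux.

Theorem theorem6 (T : finType) (e : rel T)
    (e_sym : symmetric e) (e_irr : irreflexive e)
    (e_conn : forall x y : T, connect e x y)
    (M : {set T}) (m : nat) (P : 'I_m -> seq T)
    (P_meas : forall i, measurement_path e M (P i)) :
  forall v : T, v \in nonmon M ->
    (MSC M P v - 1 <= Omega M P v) && (Omega M P v <= MSC M P v).
Proof.
move=> v vN; apply/andP; split.
  have hlt : MSC M P v - 1 < (sigma M).+1.
    by rewrite ltnS (leq_trans (leq_subr _ _)) ?MSC_le_sigma.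
  rewrite /Omega; apply: (@leq_bigmax_cond _ _ (fun k : 'I__ => nat_of_ord k) (Ordinal hlt)) => /=.
  have key : forall F1 F2 : {set T}, F1 \subset nonmon M -> #|F1| <= MSC M P v - 1 ->
      #|F2| <= MSC M P v - 1 -> v \in F2 -> v \notin F1 -> PF P F1 != PF P F2.
    move=> F1 F2 s1 c1 c2 h2 h1; apply/negP => /eqP E.
    have cov : msc_cover M P v F1.
      apply/andP; split.
        apply/subsetP => x hx; have hxN := subsetP s1 _ hx; rewrite !inE; move: hxN; rewrite !inE => ->; rewrite andbT.
        by apply/negP => /eqP ex; move: h1; rewrite -ex hx.
      rewrite E; apply/subsetP => i; rewrite !inE => /hasP [x hx]; rewrite inE => /eqP ex.
      by apply/hasP; exists x => //; rewrite ex.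
    have hm := @MSC_le_cover T M m P v F1 cov.
    have h0 : MSC M P v = 0.
      by move: (leq_trans hm c1); case: (MSC M P v) => // n; rewrite subn1 /= ltnn.
    move: c2; rewrite h0 leqn0 => /eqP /card0_eq /(_ v); by rewrite h2.
  apply/forallP => F1; apply/forallP => F2; apply/implyP => /and5P [s1 s2 c1 c2 ne].
  case: (boolP (v \in F1)) => h1; case: (boolP (v \in F2)) => h2.
  - exfalso; move/negP: ne; apply; apply/eqP/setP => x; rewrite !inE.
    by case: (x =P v) => [->|]; rewrite ?h1 ?h2 ?andbF.
  - by rewrite /distinguishable eq_sym; apply: key.
  - by apply: key.
  - exfalso; move/negP: ne; apply; apply/eqP/setP => x; rewrite !inE.
    by case: (x =P v) => [->|]; rewrite ?(negbTE h1) ?(negbTE h2) ?andbF.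
apply: Omega_le => k ks /forallP hk.
rewrite /MSC; case: ifP => // _.
apply: (big_ind (fun x => k <= x)) => // [x y hx hy|V /andP [hs hc]]; first by rewrite leq_min hx.
rewrite leqNgt; apply/negP => hlt.
have := hk V => /forallP /(_ (V :|: [set v])) /implyP => H0.
have vV : v \notin V by apply/negP => /(subsetP hs); rewrite !inE eqxx.
have sN : V \subset nonmon M by apply: (subset_trans hs); exact: subD1set.
move: H0; rewrite /distinguishable PFU.
have -> : PF P V :|: PF P [set v] = PF P V by apply/setUidPl.
rewrite eqxx => H; suff : false by []; apply: H.
apply/and5P; split => //.
- by rewrite subUset sN sub1set.
- exact: ltnW.
- by rewrite (leq_trans (leq_card_setU _ _)) // cards1 addn1.
- apply/negP => /eqP /setP /(_ v); rewrite !inE eqxx (negbTE vV) /=.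
  by [].
Qed.
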